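(* For every integer $k\ge2$, \[\mathsf P(k)=\mathsf I(k)\oplus\underline x\,\mathsf P(k-2)\,\underline x,\] where $\underline x\,\mathsf P(k-2)\,\underline x=\{\underline xP(\underline x)\underline x: P\in\mathsf P(k-2)\}$. Moreover, $\mathsf I(k)$ and $\underline x\,\mathsf P(k-2)\,\underline x$ are orthogonal with respect to $\langle\cdot,\cdot\rangle_k$; in fact $\mathsf I(k)$ is exactly the orthogonal complement of $\underline x\,\mathsf P(k-2)\,\underline x$ in $\mathsf P(k)$.
   Context: $\mathbb R_{0,m}$ is the $2^m$-dimensional real Clifford algebra generated by the orthonormal basis $e_1,\dots,e_m$ of $\mathbb R^m$ with relations $e_je_k+e_ke_j=-2\delta_{jk}$, with basis $e_A$ ($A\subseteq\{1,\dots,m\}$, $e_\emptyset=1$). For $a=\sum_Aa_Ae_A$, $[a]_0=a_\emptyset$ and the conjugation is $\overline a=\sum_Aa_A\overline{e_A}$, $\overline{e_A}=(-1)^{|A|(|A|+1)/2}e_A$. A point of $\mathbb R^m$ is identified with $\underline x=\sum_jx_je_j$. The Dirac operator $\partial_{\underline x}=\sum_je_j\partial_{x_j}$, and $\partial_{\underline x}f\partial_{\underline x}=\sum_{i,j}e_i(\partial_{x_i}\partial_{x_j}f)e_j$. $\mathsf P(k)$ is the real vector space of $\mathbb R_{0,m}$-valued homogeneous polynomials of degree $k$ on $\mathbb R^m$, and $\mathsf I(k)=\{P\in\mathsf P(k):\partial_{\underline x}P\partial_{\underline x}=0\}$ is the subspace of inframonogenic homogeneous polynomials of degree $k$. For $P_k=\sum_Ae_Ap_A(\underline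 x)$ with real homogeneous polynomials $p_A$, let $\overline{P_k(\partial_{\underline x})}=\sum_A\overline{e_A}\,p_A(\partial_{x_1},\dots,\partial_{x_m})$, and define the inner product $\langle P_k,Q_k\rangle_k=\big[\overline{P_k(\partial_{\underline x})}\,Q_k(\underline x)\big]_0$ on $\mathsf P(k)$. *)

(* Defs.v *)
From HB Require Import structures.
From mathcomp Require Import all_boot all_order all_algebra.
Set Implicit Arguments. Unset Strict Implicit. Unset Printing Implicit Defensive.
Import Order.TTheory GRing.Theory Num.Theory.
Local Open Scope ring_scope.

Definition Cl (R : realFieldType) (m : nat) := {ffun {set 'I_m} -> R}.

(* sign in e_A e_B = sgnCl A B e_{A Delta B} for e_j e_k + e_k e_j = -2 delta_jk,
   e_A = e_{a1}...e_{ar} with a1 < ... < ar *)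
Definition sgnCl (R : realFieldType) (m : nat) (A B : {set 'I_m}) : R :=
  (-1) ^+ (#|[set p : 'I_m * 'I_m | (p.1 \in A) && ((p.2 \in B) && (p.2 < p.1)%N)]|
           + #|A :&: B|)%N.

Definition symdiff (m : nat) (A B : {set 'I_m}) : {set 'I_m} := (A :\: B) :|: (B :\: A).

Definition clmul (R : realFieldType) (m : nat) (a b : Cl R m) : Cl R m :=
  [ffun C => \sum_(A : {set 'I_m}) \sum_(B : {set 'I_m} | symdiff A B == C)
               sgnCl R A B * a A * b B].

Definition eA (R : realFieldType) (m : nat) (A : {set 'I_m}) : Cl R m :=
  [ffun B => (B == A)%:R].

Definition egen (R : realFieldType) (m : nat) (j : 'I_m) : Cl R m := eA R [set j].

Definition clscale (R : realFieldType) (m : nat) (r : R) (a : Cl R m) : Cl R m :=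
  [ffun A => r * a A].

Definition scal0 (R : realFieldType) (m : nat) (a : Cl R m) : R := a set0.

Definition clconj (R : realFieldType) (m : nat) (a : Cl R m) : Cl R m :=
  [ffun A : {set 'I_m} => (-1) ^+ ((#|A| * #|A|.+1) %/ 2)%N * a A].

Definition cmono (m : nat) := {ffun 'I_m -> nat}.
Definition mdeg (m : nat) (a : cmono m) : nat := (\sum_(i < m) a i)%N.
Definition mono0 (m : nat) : cmono m := [ffun _ => 0%N].

(* a polynomial = its coefficient function (alpha |-> coefficient of x^alpha) *)
Definition cpoly (R : realFieldType) (m : nat) := cmono m -> Cl R m.

Definition pzero (R : realFieldType) (m : nat) : cpoly R m := fun _ => 0.
Arguments pzero R m : clear implicits.
Definition padd (R : realFieldType) (m : nat) (P Q : cpoly R m) : cpoly R m :=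
  fun a => P a + Q a.

(* P is in P(k): homogeneous of degree k (finitely many monomials, automatically) *)
Definition isHom (R : realFieldType) (m : nat) (k : nat) (P : cpoly R m) : Prop :=
  forall a : cmono m, mdeg a <> k -> P a = 0.

Definition mulx (R : realFieldType) (m : nat) (j : 'I_m) (P : cpoly R m) : cpoly R m :=
  fun a => if (0 < a j)%N then P [ffun i => (a i - (i == j))%N] else 0.

Definition dx (R : realFieldType) (m : nat) (j : 'I_m) (P : cpoly R m) : cpoly R m :=
  fun a => clscale (a j).+1%:R (P [ffun i => (a i + (i == j))%N]).

(* x P x = sum_{i,j} e_i (x_i x_j P) e_j *)
Definition xPx (R : realFieldType) (m : nat) (P : cpoly R m) : cpoly R m :=
  fun a => \sum_(i < m) \sum_(j < m)
             clmul (clmul (egen R i) (mulx i (mulx j P) a)) (egen R j).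

(* d P d = sum_{i,j} e_i (d_i d_j P) e_j *)
Definition dPd (R : realFieldType) (m : nat) (P : cpoly R m) : cpoly R m :=
  fun a => \sum_(i < m) \sum_(j < m)
             clmul (clmul (egen R i) (dx i (dx j P) a)) (egen R j).

Definition infra (R : realFieldType) (m : nat) (k : nat) (P : cpoly R m) : Prop :=
  isHom k P /\ dPd P = pzero R m.

Definition dmono (R : realFieldType) (m : nat) (b : cmono m) (Q : cpoly R m) : cpoly R m :=
  foldr (fun j acc => iter (b j) (dx j) acc) Q (enum 'I_m).

Definition mono_of (m k : nat) (f : {ffun 'I_m -> 'I_k.+1}) : cmono m :=
  [ffun i => nat_of_ord (f i)].

(* <P,Q>_k = [ conj(P(d)) Q(x) ]_0 where P = sum_A e_A p_A,
   conj(P(d)) = sum_A conj(e_A) p_A(d), p_A(d) = sum_{|beta| = k} p_A(beta) d^beta;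
   since conj(P(d)) Q has degree 0, its value is its constant coefficient. *)
Definition ipk (R : realFieldType) (m : nat) (k : nat) (P Q : cpoly R m) : R :=
  scal0 (\sum_(f : {ffun 'I_m -> 'I_k.+1} | mdeg (mono_of f) == k)
           \sum_(A : {set 'I_m})
              clmul (clconj (eA R A))
                    (clscale (P (mono_of f) A) (dmono (mono_of f) Q (@mono0 m)))).

(* Main.v *)
Require Import Defs.
From HB Require Import structures.
From mathcomp Require Import all_boot all_order all_algebra.
From Stdlib Require Import FunctionalExtensionality.
From Stdlib Require List.
Set Implicit Arguments. Unset Strict Implicit. Unset Printing Implicit Defensive.
Import Order.TTheory GRing.Theory Num.Theory.
Local Open Scope ring_scope.

Lemma in_symdiff m (A B : {set 'I_m}) x : (x \in symdiff A B) = (x \in A) (+) (x \in B).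
Proof. by rewrite /symdiff !inE; case: (x \in A); case: (x \in B). Qed.

Lemma symdiff_eq m (A B C : {set 'I_m}) : (symdiff A B == C) = (B == symdiff A C).
Proof.
apply/eqP/eqP => [<-|->]; apply/setP => x; rewrite !in_symdiff;
  by case: (x \in A); case: (x \in B); case: (x \in C).
Qed.

Lemma symdiffC m (A B : {set 'I_m}) : symdiff A B = symdiff B A.
Proof. by apply/setP => x; rewrite !in_symdiff addbC. Qed.

Lemma symdiffK m (A B : {set 'I_m}) : symdiff A (symdiff A B) = B.
Proof. by apply/setP => x; rewrite !in_symdiff addbA addbb. Qed.


Lemma clmul_addl (R : realFieldType) m (a b c : Cl R m) :
  clmul (a + b) c = clmul a c + clmul b c.
Proof.
apply/ffunP => C; rewrite !ffunE -big_split; apply eq_bigr => A _.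
rewrite -big_split; apply eq_bigr => B _; by rewrite ffunE mulrDr mulrDl.
Qed.

Lemma clmul_addr (R : realFieldType) m (a b c : Cl R m) :
  clmul a (b + c) = clmul a b + clmul a c.
Proof.
apply/ffunP => C; rewrite !ffunE -big_split; apply eq_bigr => A _.
rewrite -big_split; apply eq_bigr => B _; by rewrite ffunE mulrDr.
Qed.

Lemma clmul_scalel (R : realFieldType) m r (a b : Cl R m) :
  clmul (clscale r a) b = clscale r (clmul a b).
Proof.
apply/ffunP => C; rewrite !ffunE mulr_sumr; apply eq_bigr => A _.
rewrite mulr_sumr; apply eq_bigr => B _; rewrite ffunE.
by rewrite mulrCA !mulrA.
Qed.

Lemma clmul_scaler (R : realFieldType) m r (a b : Cl R m) :
  clmul a (clscale r b) = clscale r (clmul a b).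
Proof.
apply/ffunP => C; rewrite !ffunE mulr_sumr; apply eq_bigr => A _.
rewrite mulr_sumr; apply eq_bigr => B _; rewrite ffunE.
by rewrite mulrCA [r * _]mulrC.
Qed.

Lemma clmul0l (R : realFieldType) m (b : Cl R m) : clmul 0 b = 0.
Proof. apply/ffunP => C; rewrite !ffunE big1 // => A _; rewrite big1 // => B _; by rewrite ffunE mulr0 mul0r. Qed.
Lemma clmul0r (R : realFieldType) m (b : Cl R m) : clmul b 0 = 0.
Proof. apply/ffunP => C; rewrite !ffunE big1 // => A _; rewrite big1 // => B _; by rewrite ffunE mulr0. Qed.

Lemma clmul_egenl (R : realFieldType) m (i : 'I_m) (u : Cl R m) :
  clmul (egen R i) u = [ffun C => sgnCl R [set i] (symdiff [set i] C) * u (symdiff [set i] C)].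
Proof.
apply/ffunP => C; rewrite !ffunE (bigD1 [set i]) //= [X in _ + X]big1 ?addr0.
  rewrite (eq_bigl (fun B => B == symdiff [set i] C)); last by move=> B; rewrite symdiff_eq.
  by rewrite big_pred1_eq !ffunE eqxx mulr1.
move=> A /negbTE hA; apply: big1 => B _; by rewrite !ffunE hA mulr0 mul0r.
Qed.

Lemma clmul_egenr (R : realFieldType) m (j : 'I_m) (u : Cl R m) :
  clmul u (egen R j) = [ffun C => sgnCl R (symdiff C [set j]) [set j] * u (symdiff C [set j])].
Proof.
apply/ffunP => C; rewrite !ffunE.
rewrite (eq_bigr (fun A => sgnCl R A (symdiff A C) * u A * ((symdiff A C == [set j])%:R))); last first.
  move=> A _; rewrite (eq_bigl (fun B => B == symdiff A C)); last by move=> B; rewrite symdiff_eq.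
  by rewrite big_pred1_eq !ffunE.
rewrite (bigD1 (symdiff C [set j])) //= [X in _ + X]big1 ?addr0.
  have -> : symdiff (symdiff C [set j]) C = [set j].
    by rewrite symdiffC symdiffK.
  by rewrite eqxx mulr1.
move=> A hA; have -> : (symdiff A C == [set j]) = false; last by rewrite mulr0.
apply/negbTE; apply: contra hA; rewrite symdiffC symdiff_eq => /eqP ->.
by rewrite symdiffC.
Qed.

Lemma card1I m (i : 'I_m) (D : {set 'I_m}) : #|[set i] :&: D| = (i \in D).
Proof.
case h: (i \in D).
  have -> : [set i] :&: D = [set i] by apply/setP => y; rewrite !inE; case: eqP => // ->.
  by rewrite cards1.
have -> : [set i] :&: D = set0 by apply/setP => y; rewrite !inE; case: eqP => // ->; rewrite h.
by rewrite cards0.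
Qed.

Lemma sgnL (R : realFieldType) m (i : 'I_m) (D : {set 'I_m}) :
  sgnCl R [set i] D = (-1) ^+ (odd #|[set y in D | (y < i)%N]| (+) (i \in D)).
Proof.
rewrite /sgnCl -signr_odd oddD card1I; congr ((-1) ^+ (odd _ (+) _)).
rewrite -!sum1dep_card -(pair_big_dep (fun x => x \in [set i]) (fun x y => (y \in D) && (y < x)%N) (fun _ _ => 1%N)) /=.
rewrite (eq_bigl (fun x => x == i)); last by move=> x; rewrite inE.
rewrite big_pred1_eq //.
exact: oddb.
Qed.

Lemma sgnR (R : realFieldType) m (j : 'I_m) (D : {set 'I_m}) :
  sgnCl R D [set j] = (-1) ^+ (odd #|[set x in D | (j < x)%N]| (+) (j \in D)).
Proof.
rewrite /sgnCl -signr_odd oddD setIC card1I; congr ((-1) ^+ (odd _ (+) _)).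
rewrite -!sum1dep_card -(pair_big_dep (fun x => x \in D) (fun x y => (y \in [set j]) && (y < x)%N) (fun _ _ => 1%N)) /=.
rewrite big_mkcondr /=; apply eq_bigr => x _.
rewrite (eq_bigl (fun y => (y == j) && (y < x)%N)); last by move=> y; rewrite inE.
by rewrite big_mkcondr big_pred1_eq.
exact: oddb.
Qed.

Lemma toggle_odd m (j : 'I_m) (D : {set 'I_m}) (P : pred 'I_m) :
  odd #|[set y in symdiff [set j] D | P y]| = odd #|[set y in D | P y]| (+) P j.
Proof.
rewrite (cardsD1 j [set y in symdiff [set j] D | P y]) (cardsD1 j [set y in D | P y]).
have -> : [set y in symdiff [set j] D | P y] :\ j = [set y in D | P y] :\ j.
  apply/setP => y; rewrite !in_setD1 !in_set !in_set1; by case: (y == j); case: (y \in D).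
rewrite !oddD !oddb !in_set !in_set1 eqxx /=.
by case: (j \in D); case: (P j); case: (odd _).
Qed.

Lemma sgnL_flip (R : realFieldType) m (i : 'I_m) (D : {set 'I_m}) :
  sgnCl R [set i] (symdiff [set i] D) = - sgnCl R [set i] D.
Proof.
rewrite !sgnL toggle_odd in_symdiff inE eqxx ltnn /=.
by case: (odd _); case: (i \in D); rewrite /= ?expr0 ?expr1 ?opprK.
Qed.

Lemma sgnR_flip (R : realFieldType) m (j : 'I_m) (D : {set 'I_m}) :
  sgnCl R (symdiff D [set j]) [set j] = - sgnCl R D [set j].
Proof.
rewrite !sgnR symdiffC toggle_odd in_symdiff inE eqxx ltnn /=.
by case: (odd _); case: (j \in D); rewrite /= ?expr0 ?expr1 ?opprK.
Qed.

Lemma sgn_assoc (R : realFieldType) m (i j : 'I_m) (C : {set 'I_m}) :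
  sgnCl R [set i] (symdiff [set i] C) * sgnCl R (symdiff (symdiff [set i] C) [set j]) [set j]
  = sgnCl R (symdiff C [set j]) [set j] * sgnCl R [set i] (symdiff [set i] (symdiff C [set j])).
Proof.
rewrite !sgnL !sgnR.
rewrite [symdiff (symdiff [set i] C) [set j]]symdiffC [symdiff C [set j]]symdiffC.
rewrite !toggle_odd !in_symdiff !inE eqxx ltnn /= [j == i]eq_sym.
rewrite -!signr_addb; congr ((-1) ^+ _).
rewrite !ltnn !eqxx.
move: (odd _) (odd _) (i \in C) (j \in C) (i == j) (j < i)%N => a b c d e f.
by case: a; case: b; case: c; case: d; case: e; case: f.
Qed.

Definition dotCl (R : realFieldType) m (u v : Cl R m) : R := \sum_A u A * v A.

Lemma dot_egenl (R : realFieldType) m (i : 'I_m) (u v : Cl R m) :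
  dotCl (clmul (egen R i) u) v = - dotCl u (clmul (egen R i) v).
Proof.
rewrite /dotCl (reindex_inj (can_inj (@symdiffK m [set i]))) /= -sumrN.
apply eq_bigr => D _; rewrite !clmul_egenl !ffunE symdiffK sgnL_flip.
by rewrite mulNr mulrN opprK mulrA [_ * sgnCl _ _ _]mulrC.
Qed.

Lemma symdiffKr m (A B : {set 'I_m}) : symdiff (symdiff B A) A = B.
Proof. by rewrite symdiffC [symdiff B A]symdiffC symdiffK. Qed.

Lemma dot_egenr (R : realFieldType) m (j : 'I_m) (u v : Cl R m) :
  dotCl (clmul u (egen R j)) v = - dotCl u (clmul v (egen R j)).
Proof.
have inj : injective (fun B : {set 'I_m} => symdiff B [set j]).
  by apply: (can_inj (g := fun B : {set 'I_m} => symdiff B [set j])) => B; rewrite symdiffKr.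
rewrite /dotCl (reindex_inj inj) /= -sumrN.
apply eq_bigr => D _; rewrite !clmul_egenr !ffunE symdiffKr sgnR_flip.
by rewrite mulNr mulrN opprK mulrA [_ * sgnCl _ _ _]mulrC.
Qed.

Lemma clmul_assoc_e (R : realFieldType) m (i j : 'I_m) (v : Cl R m) :
  clmul (egen R i) (clmul v (egen R j)) = clmul (clmul (egen R i) v) (egen R j).
Proof.
apply/ffunP => C; rewrite !clmul_egenl !clmul_egenr !ffunE.
have -> : symdiff [set i] (symdiff C [set j]) = symdiff (symdiff [set i] C) [set j].
  by apply/setP => x; rewrite !in_symdiff addbA.
rewrite mulrA sgn_assoc.
have -> : symdiff [set i] (symdiff C [set j]) = symdiff (symdiff [set i] C) [set j].
  by apply/setP => x; rewrite !in_symdiff addbA.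
by rewrite mulrA.
Qed.

Lemma dot_sandwich (R : realFieldType) m (i j : 'I_m) (u v : Cl R m) :
  dotCl (clmul (clmul (egen R i) u) (egen R j)) v =
  dotCl u (clmul (clmul (egen R i) v) (egen R j)).
Proof. by rewrite dot_egenr dot_egenl opprK clmul_assoc_e. Qed.

Lemma card_pairs (T : finType) (P : T -> T -> bool) :
  #|[set p : T * T | P p.1 p.2]| = (\sum_x \sum_y (P x y : nat))%N.
Proof.
rewrite -sum1dep_card big_mkcond /=.
rewrite -(pair_bigA _ (fun x y => if P x y then 1%N else 0%N)) /=.
by apply eq_bigr => x _; apply eq_bigr => y _; case: (P x y).
Qed.

Lemma pairs_count m (A : {set 'I_m}) :
  (#|[set p : 'I_m * 'I_m | (p.1 \in A) && ((p.2 \in A) && (p.2 < p.1)%N)]| *2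
   + #|A| = #|A| * #|A|)%N.
Proof.
rewrite -cardsX.
have -> : setX A A = [set p : 'I_m * 'I_m | (p.1 \in A) && (p.2 \in A)].
  by apply/setP => p; rewrite !inE.
rewrite !(card_pairs (fun x y => (x \in A) && ((y \in A) && (y < x)%N)))
        (card_pairs (fun x y => (x \in A) && (y \in A))).
have hd : #|A| = (\sum_x \sum_y ((x \in A) && (y == x) : nat))%N.
  rewrite -sum1_card big_mkcond /=; apply eq_bigr => x _.
  rewrite (bigD1 x) //= big1 ?addn0; first by rewrite eqxx andbT; case: (x \in A).
  by move=> y /negbTE ->; rewrite andbF.
have hu : (\sum_x \sum_y ((x \in A) && ((y \in A) && (y < x)%N) : nat))%N =
          (\sum_x \sum_y ((y \in A) && ((x \in A) && (x < y)%N) : nat))%N.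
  by rewrite exchange_big.
rewrite muln2 -addnn {2}hu hd -!big_split /=.
apply eq_bigr => x _; rewrite -!big_split /=; apply eq_bigr => y _.
case: (ltngtP x y) => h.
- have -> : (y == x) = false by apply/eqP => e; rewrite e ltnn in h.
  by case: (x \in A); case: (y \in A).
- have -> : (y == x) = false by apply/eqP => e; rewrite e ltnn in h.
  by case: (x \in A); case: (y \in A).
- have -> : y = x by apply: val_inj.
  by rewrite ?ltnn eqxx /= !andbF andbT andbb.
Qed.

Lemma sign_self (R : realFieldType) m (A : {set 'I_m}) :
  sgnCl R A A * (-1) ^+ ((#|A| * #|A|.+1) %/ 2)%N = 1.
Proof.
rewrite /sgnCl setIid.
set c := #|[set p : 'I_m * 'I_m | _]|.
have hc : (c * 2 + #|A| = #|A| * #|A|)%N by rewrite /c pairs_count.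
have -> : (#|A| * #|A|.+1 = (c + #|A|) * 2)%N by rewrite mulnS -hc mulnDl addnCA addnn !muln2.
rewrite mulnK // -exprD addnn -signr_odd odd_double.
by rewrite expr0.
Qed.

Lemma symdiff0 m (A : {set 'I_m}) : symdiff A set0 = A.
Proof. by apply/setP => x; rewrite in_symdiff inE addbF. Qed.

Lemma scal0_conj (R : realFieldType) m (A : {set 'I_m}) (X : Cl R m) :
  scal0 (clmul (clconj (eA R A)) X) = X A.
Proof.
rewrite /scal0 ffunE (bigD1 A) //= [X in _ + X]big1 ?addr0.
  rewrite (eq_bigl (fun B => B == A)); last by move=> B; rewrite symdiff_eq symdiff0.
  rewrite big_pred1_eq !ffunE eqxx /= mulr1n mulr1 sign_self mul1r //.
move=> A' hA'; apply: big1 => B _; rewrite !ffunE (negbTE hA') /= mulr0n mulr0.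
by rewrite mulr0 mul0r.
Qed.

Definition incm m (j : 'I_m) (b : cmono m) : cmono m := [ffun i => (b i + (i == j))%N].
Definition decm m (j : 'I_m) (b : cmono m) : cmono m := [ffun i => (b i - (i == j))%N].
Definition fct m (b : cmono m) : nat := (\prod_(i < m) (b i)`!)%N.

Lemma le_mdeg m (a : cmono m) i : (a i <= mdeg a)%N.
Proof. by rewrite /mdeg (bigD1 i) //= leq_addr. Qed.

Lemma mdeg_incm m j (b : cmono m) : mdeg (incm j b) = (mdeg b).+1.
Proof.
rewrite /mdeg (eq_bigr (fun i => b i + (i == j))%N); last by move=> i _; rewrite ffunE.
rewrite big_split /=.
have -> : (\sum_(i < m) (i == j) = 1)%N.
  by rewrite (bigD1 j) //= eqxx big1 // => i /negbTE ->.
by rewrite addn1.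
Qed.

Lemma incmK m j (b : cmono m) : decm j (incm j b) = b.
Proof. by apply/ffunP => i; rewrite !ffunE addnK. Qed.

Lemma decmK m j (a : cmono m) : (0 < a j)%N -> incm j (decm j a) = a.
Proof.
move=> h; apply/ffunP => i; rewrite !ffunE; case: eqP => [->|_]; last by rewrite !subn0 addn0.
by rewrite subnK.
Qed.

Lemma mdeg_decm m j (a : cmono m) : (0 < a j)%N -> mdeg a = (mdeg (decm j a)).+1.
Proof. by move=> h; rewrite -(mdeg_incm j) decmK. Qed.

Lemma fct_incm m j (b : cmono m) : fct (incm j b) = ((b j).+1 * fct b)%N.
Proof.
rewrite /fct (bigD1 j) //= [in RHS](bigD1 j) //= !ffunE eqxx addn1 factS mulnA.
congr (_ * _)%N; apply eq_bigr => i /negbTE h; by rewrite ffunE h addn0.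
Qed.

Lemma fct_gt0 m (b : cmono m) : (0 < fct b)%N.
Proof. by apply: prodn_gt0 => i; apply: fact_gt0. Qed.

Lemma hom_mulx (R : realFieldType) m n j (Q : cpoly R m) :
  isHom n Q -> isHom n.+1 (mulx j Q).
Proof.
move=> hQ a ha; rewrite /mulx; case: ifP => // h; apply: hQ => e.
by apply: ha; rewrite (mdeg_decm h) e.
Qed.

Lemma hom_dx (R : realFieldType) m n j (P : cpoly R m) :
  isHom n.+1 P -> isHom n (dx j P).
Proof.
move=> hP a ha; rewrite /dx.
have -> : P [ffun i => (a i + (i == j))%N] = 0.
  apply: hP; change (mdeg (incm j a) <> n.+1); rewrite mdeg_incm => e.
  by apply: ha; case: e.
by apply/ffunP => B; rewrite !ffunE mulr0.
Qed.

Lemma hom_xPx (R : realFieldType) m n (Q : cpoly R m) :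
  isHom n Q -> isHom n.+2 (xPx Q).
Proof.
move=> hQ a ha; rewrite /xPx big1 // => i _; rewrite big1 // => j _.
by rewrite (hom_mulx i (hom_mulx j hQ)) // clmul0r clmul0l.
Qed.

Lemma hom_dPd (R : realFieldType) m n (P : cpoly R m) :
  isHom n.+2 P -> isHom n (dPd P).
Proof.
move=> hP a ha; rewrite /dPd big1 // => i _; rewrite big1 // => j _.
by rewrite (hom_dx i (hom_dx j hP)) // clmul0r clmul0l.
Qed.

Lemma dotClC (R : realFieldType) m (u v : Cl R m) : dotCl u v = dotCl v u.
Proof. by apply eq_bigr => A _; rewrite mulrC. Qed.

Lemma dotCl_scaler (R : realFieldType) m r (u v : Cl R m) :
  dotCl u (clscale r v) = r * dotCl u v.
Proof. by rewrite /dotCl mulr_sumr; apply eq_bigr => A _; rewrite ffunE mulrCA. Qed.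

Lemma dotCl0l (R : realFieldType) m (v : Cl R m) : dotCl 0 v = 0.
Proof. by rewrite /dotCl big1 // => A _; rewrite ffunE mul0r. Qed.

Lemma dotCl_lin (R : realFieldType) m s t (u1 u2 v : Cl R m) :
  dotCl (clscale s u1 + clscale t u2) v = s * dotCl u1 v + t * dotCl u2 v.
Proof.
rewrite /dotCl !mulr_sumr -big_split; apply eq_bigr => A _.
by rewrite !ffunE mulrDl !mulrA.
Qed.

Lemma dotCl_suml (R : realFieldType) m (I : finType) (F : I -> Cl R m) v :
  dotCl (\sum_i F i) v = \sum_i dotCl (F i) v.
Proof.
rewrite /dotCl exchange_big /=; apply eq_bigr => A _.
by rewrite sum_ffunE mulr_suml.
Qed.

Lemma dotCl_ge0 (R : realFieldType) m (u : Cl R m) : 0 <= dotCl u u.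
Proof. by apply: sumr_ge0 => A _; rewrite -expr2 sqr_ge0. Qed.

Lemma dotCl_eq0 (R : realFieldType) m (u : Cl R m) : dotCl u u = 0 -> u = 0.
Proof.
move=> h; apply/ffunP => A; rewrite ffunE.
have hp : forall B : {set 'I_m}, true -> 0 <= u B * u B by move=> B _; rewrite -expr2 sqr_ge0.
have := psumr_eq0P hp h (i := A) isT.
by move=> /eqP; rewrite mulf_eq0 orbb => /eqP.
Qed.

Definition ipN (R : realFieldType) m N n (P Q : cpoly R m) : R :=
  \sum_(f : {ffun 'I_m -> 'I_N.+1} | mdeg (mono_of f) == n)
     (fct (mono_of f))%:R * dotCl (P (mono_of f)) (Q (mono_of f)).

Lemma mono_of_surj m N (a : cmono m) : (mdeg a <= N)%N ->
  exists f : {ffun 'I_m -> 'I_N.+1}, mono_of f = a.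
Proof.
move=> h; exists [ffun i => inord (a i)]; apply/ffunP => i; rewrite !ffunE inordK //.
by rewrite ltnS (leq_trans (le_mdeg a i)).
Qed.

Lemma mono_of_inj m N : injective (@mono_of m N).
Proof.
move=> f g e; apply/ffunP => i; apply: val_inj.
by have := congr1 (fun h : cmono m => h i) e; rewrite !ffunE.
Qed.

Lemma ipN_pos (R : realFieldType) m N n (P : cpoly R m) :
  isHom n P -> (n <= N)%N -> ipN N n P P = 0 -> P = pzero R m.
Proof.
move=> hP hn h; apply: functional_extensionality => a; rewrite /pzero.
case: (eqVneq (mdeg a) n) => ha; last by apply: hP; apply/eqP.
have [f hf] : exists f : {ffun 'I_m -> 'I_N.+1}, mono_of f = a by apply: mono_of_surj; rewrite ha.
have hp : forall g : {ffun 'I_m -> 'I_N.+1}, mdeg (mono_of g) == n ->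
    0 <= (fct (mono_of g))%:R * dotCl (P (mono_of g)) (P (mono_of g)).
  by move=> g _; rewrite mulr_ge0 ?ler0n ?dotCl_ge0.
have := psumr_eq0P hp h (i := f); rewrite hf ha eqxx => /(_ isT) /eqP.
rewrite mulf_eq0 pnatr_eq0 (negbTE (lt0n_neq0 (fct_gt0 a))) /= => /eqP; exact: dotCl_eq0.
Qed.

Lemma ipNC (R : realFieldType) m N n (P Q : cpoly R m) : ipN N n P Q = ipN N n Q P.
Proof. by apply eq_bigr => f _; rewrite dotClC. Qed.

Definition incF m N (j : 'I_m) (g : {ffun 'I_m -> 'I_N.+1}) : {ffun 'I_m -> 'I_N.+1} :=
  [ffun i => inord (g i + (i == j))].
Definition decF m N (j : 'I_m) (g : {ffun 'I_m -> 'I_N.+1}) : {ffun 'I_m -> 'I_N.+1} :=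
  [ffun i => inord (g i - (i == j))].

Lemma mono_of_incF m N j (g : {ffun 'I_m -> 'I_N.+1}) : (g j < N)%N ->
  mono_of (incF j g) = incm j (mono_of g).
Proof.
move=> h; apply/ffunP => i; rewrite !ffunE inordK //.
case: eqP => [->|_]; first by rewrite addn1.
by rewrite addn0.
Qed.

Lemma mono_of_decF m N j (g : {ffun 'I_m -> 'I_N.+1}) :
  mono_of (decF j g) = decm j (mono_of g).
Proof.
apply/ffunP => i; rewrite !ffunE inordK //.
by rewrite ltnS (leq_trans (leq_subr _ _)) // -ltnS.
Qed.

Lemma shift_sum (R : realFieldType) m N n (j : 'I_m) (H : cmono m -> R) : (n < N)%N ->
  \sum_(f : {ffun 'I_m -> 'I_N.+1} | mdeg (mono_of f) == n.+1)
     (if (0 < mono_of f j)%N then H (mono_of f) else 0)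
  = \sum_(g : {ffun 'I_m -> 'I_N.+1} | mdeg (mono_of g) == n) H (incm j (mono_of g)).
Proof.
move=> hn; rewrite -big_mkcondr (reindex_onto (incF j) (decF j)) /=; last first.
  move=> f /andP [_ hf]; rewrite ffunE in hf; apply: mono_of_inj.
  have hd : (decF j f j < N)%N.
    rewrite ffunE inordK; last by rewrite ltnS (leq_trans (leq_subr _ _)) // -ltnS ltn_ord.
    by rewrite eqxx subn1 -ltnS prednK // ltn_ord.
  by rewrite mono_of_incF // mono_of_decF decmK // ffunE.
have key : forall g : {ffun 'I_m -> 'I_N.+1},
    ((mdeg (mono_of (incF j g)) == n.+1) && (0 < mono_of (incF j g) j)%N)
      && (decF j (incF j g) == g) = (mdeg (mono_of g) == n).
  move=> g; case: (ltnP (g j) N) => hg.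
    rewrite mono_of_incF // mdeg_incm eqSS !ffunE eqxx addn1 /= andbT.
    suff -> : decF j (incF j g) = g by rewrite eqxx andbT.
    by apply: mono_of_inj; rewrite mono_of_decF mono_of_incF // incmK.
  have -> : mdeg (mono_of g) == n = false.
    apply/negbTE; apply: contraTneq isT => e.
    have := le_mdeg (mono_of g) j; rewrite e ffunE => h1.
    by have := leq_ltn_trans (leq_trans hg h1) hn; rewrite ltnn.
  have -> : decF j (incF j g) == g = false; last by rewrite andbF.
  apply/negbTE/eqP => e; have := congr1 (fun h : {ffun 'I_m -> 'I_N.+1} => nat_of_ord (h j)) e.
  rewrite /= !ffunE eqxx inordK; last by rewrite ltnS (leq_trans (leq_subr _ _)) // -ltnS ltn_ord.
  have gjN : nat_of_ord (g j) = N by apply/eqP; rewrite eqn_leq hg -ltnS ltn_ord.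
  rewrite /= val_insubd gjN addn1 ltnn /= => h0.
  by rewrite -h0 in hn.
apply: eq_big => g; first by rewrite key.
rewrite key => hg; congr H; apply: mono_of_incF.
apply: leq_ltn_trans hn; rewrite -(eqP hg).
by have := le_mdeg (mono_of g) j; rewrite ffunE.
Qed.

Lemma clscale_comp (R : realFieldType) m r t (v : Cl R m) :
  clscale r (clscale t v) = clscale (r * t) v.
Proof. by apply/ffunP => A; rewrite !ffunE mulrA. Qed.

Lemma adj1 (R : realFieldType) m N n (j : 'I_m) (Q W : cpoly R m) : (n < N)%N ->
  ipN N n.+1 (mulx j Q) W = ipN N n Q (dx j W).
Proof.
move=> hn; rewrite /ipN.
rewrite (eq_bigr (fun f => if (0 < mono_of f j)%N then
     (fct (mono_of f))%:R * dotCl (Q (decm j (mono_of f))) (W (mono_of f)) else 0)); last first.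
  by move=> f _; rewrite /mulx; case: ifP => _ //; rewrite dotCl0l mulr0.
rewrite (@shift_sum R m N n j (fun a => (fct a)%:R * dotCl (Q (decm j a)) (W a))) //.
apply eq_bigr => g _; rewrite incmK fct_incm natrM.
change (dx j W (mono_of g)) with (clscale ((mono_of g j).+1)%:R (W (incm j (mono_of g)))).
by rewrite dotCl_scaler mulrCA mulrA.
Qed.

Lemma incmC m i j (a : cmono m) : incm i (incm j a) = incm j (incm i a).
Proof. by apply/ffunP => x; rewrite !ffunE addnAC. Qed.

Lemma dx_comm (R : realFieldType) m i j (P : cpoly R m) : dx i (dx j P) = dx j (dx i P).
Proof.
apply: functional_extensionality => a; rewrite /dx.
change (clscale (a i).+1%:R (clscale ((incm i a) j).+1%:R (P (incm j (incm i a)))) =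
        clscale (a j).+1%:R (clscale ((incm j a) i).+1%:R (P (incm i (incm j a))))).
rewrite !clscale_comp incmC; congr clscale.
case: (eqVneq i j) => [->//|h]; rewrite !ffunE (negbTE h) eq_sym (negbTE h) !addn0.
by rewrite mulrC.
Qed.

Lemma dx_sand (R : realFieldType) m i j k (P : cpoly R m) :
  dx j (fun a => clmul (clmul (egen R i) (P a)) (egen R k)) =
  fun a => clmul (clmul (egen R i) (dx j P a)) (egen R k).
Proof.
apply: functional_extensionality => a; rewrite /dx.
by rewrite clmul_scaler clmul_scalel.
Qed.

Lemma ipN_sum2 (R : realFieldType) m N n (F : 'I_m -> 'I_m -> cpoly R m) (Q : cpoly R m) :
  ipN N n Q (fun a => \sum_i \sum_j F i j a) = \sum_i \sum_j ipN N n Q (F i j).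
Proof.
rewrite /ipN.
rewrite (eq_bigr (fun f => \sum_i \sum_j (fct (mono_of f))%:R * dotCl (Q (mono_of f)) (F i j (mono_of f)))); last first.
  move=> f _; rewrite dotClC dotCl_suml mulr_sumr; apply eq_bigr => i _.
  by rewrite dotCl_suml mulr_sumr; apply eq_bigr => j _; rewrite dotClC.
rewrite exchange_big /=; apply eq_bigr => i _.
by rewrite exchange_big.
Qed.

Lemma adjoint (R : realFieldType) m N n (Q P : cpoly R m) : (n.+2 <= N)%N ->
  ipN N n.+2 (xPx Q) P = ipN N n Q (dPd P).
Proof.
move=> hN; rewrite ipNC /xPx ipN_sum2.
under eq_bigr => i _ do under eq_bigr => j _ do rewrite ipNC.
rewrite /dPd ipN_sum2; apply eq_bigr => i _; apply eq_bigr => j _.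
have -> : ipN N n.+2 (fun a => clmul (clmul (egen R i) (mulx i (mulx j Q) a)) (egen R j)) P
        = ipN N n.+2 (mulx i (mulx j Q)) (fun a => clmul (clmul (egen R i) (P a)) (egen R j)).
  by apply eq_bigr => f _; rewrite dot_sandwich.
rewrite adj1 // adj1 ?(ltn_trans _ hN) // !dx_sand dx_comm.
by [].
Qed.

Lemma clscale1 (R : realFieldType) m (v : Cl R m) : clscale 1 v = v.
Proof. by apply/ffunP => A; rewrite ffunE mul1r. Qed.

Lemma iter_dx (R : realFieldType) m (j : 'I_m) n (P : cpoly R m) a :
  iter n (dx j) P a =
  clscale ((a j + n) ^_ n)%:R (P [ffun i => (a i + (if i == j then n else 0))%N]).
Proof.
elim: n P => [|n IH] P.
  rewrite ffactn0 clscale1; congr P; apply/ffunP => i; rewrite ffunE.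
  by case: (i == j); rewrite addn0.
rewrite iterSr IH /dx clscale_comp !ffunE eqxx; congr clscale.
  by rewrite -natrM addnS ffactSS mulnC.
congr P; apply/ffunP => i; rewrite !ffunE; case: (eqVneq i j) => [->|h]; rewrite ?eqxx ?(negbTE h) /= ?addn0 ?addnS ?addn1 ?addn0 //.
Qed.

Lemma foldr_dx (R : realFieldType) m (b : cmono m) (s : seq 'I_m) (Q : cpoly R m) :
  uniq s -> forall a,
  foldr (fun j acc => iter (b j) (dx j) acc) Q s a =
  clscale (\prod_(j <- s) ((a j + b j) ^_ (b j)))%N%:R
          (Q [ffun i => (a i + (if i \in s then b i else 0))%N]).
Proof.
elim: s => [|j s IH] /=.
  move=> _ a; rewrite big_nil clscale1; congr Q; apply/ffunP => i; by rewrite ffunE addn0.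
move=> /andP [js us] a; rewrite iter_dx IH // clscale_comp big_cons natrM.
congr clscale.
  congr (_ * _); congr (_%:R); rewrite big_seq [in RHS]big_seq.
  apply eq_bigr => i hi; rewrite ffunE.
  have -> : (i == j) = false by apply/negbTE; apply: contraNneq js => <-.
  by rewrite addn0.
congr Q; apply/ffunP => i; rewrite !ffunE in_cons.
case: (eqVneq i j) => [->|h] /=.
  by rewrite (negbTE js) addn0.
by rewrite addn0.
Qed.

Lemma dmono0 (R : realFieldType) m (b : cmono m) (Q : cpoly R m) :
  dmono b Q (mono0 m) = clscale (fct b)%:R (Q b).
Proof.
rewrite /dmono foldr_dx ?enum_uniq //; congr clscale.
  congr (_%:R); rewrite /fct big_enum /=; apply eq_bigr => i _.
  by rewrite ffunE add0n ffactnn.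
congr Q; apply/ffunP => i; by rewrite !ffunE mem_enum add0n.
Qed.

Lemma ipk_ipN (R : realFieldType) m k (P Q : cpoly R m) : ipk k P Q = ipN k k P Q.
Proof.
rewrite /ipk /scal0 sum_ffunE; apply eq_bigr => f _.
rewrite sum_ffunE /dotCl mulr_sumr; apply eq_bigr => A _.
rewrite -/(scal0 _) scal0_conj dmono0 !ffunE.
by rewrite mulrCA.
Qed.

Definition pcomb (R : realFieldType) m (s : R) (P : cpoly R m) (t : R) (Q : cpoly R m) : cpoly R m :=
  fun a => clscale s (P a) + clscale t (Q a).

Lemma clscale0 (R : realFieldType) m r : clscale r (0 : Cl R m) = 0.
Proof. by apply/ffunP => A; rewrite !ffunE mulr0. Qed.

Lemma clscale_sum (R : realFieldType) m r (I : finType) (F : I -> Cl R m) :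
  clscale r (\sum_i F i) = \sum_i clscale r (F i).
Proof.
apply/ffunP => A; rewrite ffunE !sum_ffunE mulr_sumr; apply eq_bigr => i _.
by rewrite ffunE.
Qed.

Lemma mulx_comb (R : realFieldType) m j s t (P Q : cpoly R m) :
  mulx j (pcomb s P t Q) = pcomb s (mulx j P) t (mulx j Q).
Proof.
apply: functional_extensionality => a; rewrite /mulx /pcomb.
by case: ifP => _ //; rewrite !clscale0 addr0.
Qed.

Lemma xPx_comb (R : realFieldType) m s t (P Q : cpoly R m) :
  xPx (pcomb s P t Q) = pcomb s (xPx P) t (xPx Q).
Proof.
apply: functional_extensionality => a; rewrite /xPx /pcomb !clscale_sum -big_split.
apply eq_bigr => i _; rewrite !clscale_sum -big_split; apply eq_bigr => j _.
rewrite !mulx_comb /pcomb clmul_addr clmul_addl !clmul_scaler !clmul_scalel.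
by [].
Qed.

Lemma xPx_zero (R : realFieldType) m : xPx (pzero R m) = pzero R m.
Proof.
have hz : forall j, mulx j (pzero R m) = pzero R m.
  by move=> j; apply: functional_extensionality => b; rewrite /mulx; case: ifP.
apply: functional_extensionality => a; rewrite /xPx /pzero /=.
apply: big1 => i _; apply: big1 => j _; by rewrite !hz /pzero clmul0r clmul0l.
Qed.

Lemma ipN_comb (R : realFieldType) m N n s t (P Q W : cpoly R m) :
  ipN N n (pcomb s P t Q) W = s * ipN N n P W + t * ipN N n Q W.
Proof.
rewrite /ipN !mulr_sumr -big_split; apply eq_bigr => f _.
by rewrite /pcomb dotCl_lin mulrDr !mulrA [_ * s]mulrC [_ * t]mulrC.
Qed.

Lemma ipN_combr (R : realFieldType) m N n s t (P Q W : cpoly R m) :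
  ipN N n W (pcomb s P t Q) = s * ipN N n W P + t * ipN N n W Q.
Proof. by rewrite ipNC ipN_comb !(ipNC _ _ W). Qed.

Lemma ipN_zero (R : realFieldType) m N n (W : cpoly R m) : ipN N n (pzero R m) W = 0.
Proof. by rewrite /ipN big1 // => f _; rewrite /pzero dotCl0l mulr0. Qed.

Lemma hom_comb (R : realFieldType) m n s t (P Q : cpoly R m) :
  isHom n P -> isHom n Q -> isHom n (pcomb s P t Q).
Proof. by move=> hP hQ a ha; rewrite /pcomb hP // hQ // !clscale0 addr0. Qed.

Inductive spanI (R : realFieldType) m (qs : seq (cpoly R m)) : cpoly R m -> Prop :=
| sp0 : spanI qs (pzero R m)
| spIn q : List.In q qs -> spanI qs q
| spC s t Q1 Q2 : spanI qs Q1 -> spanI qs Q2 -> spanI qs (pcomb s Q1 t Q2).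

Lemma span_hom (R : realFieldType) m n (qs : seq (cpoly R m)) Q :
  (forall q, List.In q qs -> isHom n q) -> spanI qs Q -> isHom n Q.
Proof.
move=> h; elim => [|q hq|s t Q1 Q2 _ h1 _ h2]; last by apply: hom_comb.
  by move=> a _.
exact: h.
Qed.

Lemma span_orth (R : realFieldType) m N n (qs : seq (cpoly R m)) Q W :
  (forall q, List.In q qs -> ipN N n (xPx q) W = 0) -> spanI qs Q -> ipN N n (xPx Q) W = 0.
Proof.
move=> h; elim => [|q hq|s t Q1 Q2 _ h1 _ h2].
- by rewrite xPx_zero ipN_zero.
- exact: h.
by rewrite xPx_comb ipN_comb h1 h2 !mulr0 addr0.
Qed.

Lemma span_cons (R : realFieldType) m (qs : seq (cpoly R m)) q0 Q :
  spanI qs Q -> spanI (q0 :: qs) Q.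
Proof.
elim => [|q hq|s t Q1 Q2 _ h1 _ h2]; first exact: sp0.
  by apply: spIn; right.
exact: spC.
Qed.

Lemma GS (R : realFieldType) m k (qs : seq (cpoly R m)) : (2 <= k)%N ->
  (forall q, List.In q qs -> isHom (k - 2) q) ->
  forall p : cpoly R m, exists Q, spanI qs Q /\
    forall q, List.In q qs -> ipN k k (xPx q) (pcomb 1 p (-1) (xPx Q)) = 0.
Proof.
move=> hk; elim: qs => [|q0 qs IH] hq p.
  by exists (pzero R m); split; [exact: sp0 | by []].
have hq' : forall q, List.In q qs -> isHom (k-2) q by move=> q h; apply: hq; right.
have [Q1 [sQ1 o1]] := IH hq' p.
have [Q2 [sQ2 o2]] := IH hq' (xPx q0).
have hV : isHom (k-2) (pcomb 1 q0 (-1) Q2).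
  by apply: hom_comb; [apply: hq; left | apply: span_hom hq' sQ2].
have hXV : isHom k (xPx (pcomb 1 q0 (-1) Q2)).
  by have := hom_xPx hV; rewrite -addn2 subnK.
have oV : forall q, List.In q qs -> ipN k k (xPx q) (xPx (pcomb 1 q0 (-1) Q2)) = 0.
  by move=> q h; rewrite xPx_comb; exact: o2 q h.
have hq0 : xPx q0 = pcomb 1 (xPx (pcomb 1 q0 (-1) Q2)) 1 (xPx Q2).
  rewrite -xPx_comb; congr xPx.
  apply: functional_extensionality => a; apply/ffunP => A; rewrite /pcomb !ffunE.
  by rewrite !mul1r mulN1r addrNK.
move: hXV oV hq0.
set V := pcomb 1 q0 (-1) Q2; set p' := pcomb 1 p (-1) (xPx Q1) => hXV oV hq0.
case: (eqVneq (ipN k k (xPx V) (xPx V)) 0) => hd.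
  have XV0 : xPx V = pzero R m := ipN_pos hXV (leqnn k) hd.
  exists Q1; split; first exact: span_cons.
  move=> q [<-|h]; last exact: o1.
  by rewrite hq0 ipN_comb XV0 ipN_zero (span_orth o1 sQ2) !mulr0 addr0.
set t := ipN k k (xPx V) p' / ipN k k (xPx V) (xPx V).
exists (pcomb 1 Q1 t V); split.
  apply: spC; first exact: span_cons.
  apply: spC; [by apply: spIn; left | exact: span_cons].
have ep : pcomb 1 p (-1) (xPx (pcomb 1 Q1 t V)) = pcomb 1 p' (-t) (xPx V).
  rewrite xPx_comb; apply: functional_extensionality => a; apply/ffunP => A.
  rewrite /p' /pcomb !ffunE.
  by rewrite !mul1r !mulN1r opprD addrA mulNr.
rewrite ep.
have oq : forall q, List.In q qs -> ipN k k (xPx q) (pcomb 1 p' (-t) (xPx V)) = 0.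
  by move=> q h; rewrite ipN_combr (o1 q h) (oV q h) !mulr0 addr0.
move=> q [<-|h]; last exact: oq.
rewrite hq0 ipN_comb (span_orth oq sQ2) mulr0 addr0 mul1r ipN_combr.
by rewrite mul1r /t mulNr divfK // subrr.
Qed.

Lemma In_map (A B : Type) (f : A -> B) (s : seq A) y :
  List.In y (map f s) <-> exists x, List.In x s /\ f x = y.
Proof.
elim: s => [|x s IH] /=; first by split => // -[x []].
split.
  case=> [<-|/IH [z [h1 h2]]]; first by exists x; split => //; left.
  by exists z; split => //; right.
case=> z [[<-|h1] h2]; first by left.
by right; apply/IH; exists z.
Qed.

Lemma In_mem (T : eqType) (x : T) (s : seq T) : List.In x s <-> x \in s.
Proof.
elim: s => [|y s IH] //=; rewrite in_cons; split.
  by case=> [->|/IH ->]; rewrite ?eqxx ?orbT.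
by case/orP => [/eqP ->|/IH h]; [left | right].
Qed.

Definition bq (R : realFieldType) m (b : cmono m) (A : {set 'I_m}) : cpoly R m :=
  fun a => if a == b then eA R A else 0.

Definition basis (R : realFieldType) m n : seq (cpoly R m) :=
  map (fun p : ({ffun 'I_m -> 'I_n.+1} * {set 'I_m})%type => bq R (mono_of p.1) p.2)
    (filter (fun p : ({ffun 'I_m -> 'I_n.+1} * {set 'I_m})%type => mdeg (mono_of p.1) == n)
       (enum {: {ffun 'I_m -> 'I_n.+1} * {set 'I_m}})).

Lemma basis_hom (R : realFieldType) m n q : List.In q (basis R m n) -> isHom n q.
Proof.
move=> /In_map [[f A] [/In_mem]]; rewrite mem_filter /= => /andP [hf _] <- a ha.
rewrite /bq; case: eqP => // e; by rewrite e (eqP hf) in ha.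
Qed.

Lemma basis_in (R : realFieldType) m n (f : {ffun 'I_m -> 'I_n.+1}) A :
  mdeg (mono_of f) == n -> List.In (bq R (mono_of f) A) (basis R m n).
Proof.
move=> hf; apply/In_map; exists (f, A); split => //.
by apply/In_mem; rewrite mem_filter hf mem_enum.
Qed.

Lemma ipN_bq (R : realFieldType) m N n (b : cmono m) A (D : cpoly R m) :
  mdeg b = n -> (n <= N)%N -> ipN N n (bq R b A) D = (fct b)%:R * D b A.
Proof.
move=> hb hn; have [g hg] : exists g : {ffun 'I_m -> 'I_N.+1}, mono_of g = b.
  by apply: mono_of_surj; rewrite hb.
rewrite /ipN (bigD1 g) /=; last by rewrite hg hb.
rewrite big1 ?addr0.
  rewrite hg /bq eqxx; congr (_ * _).
  rewrite /dotCl (bigD1 A) //= big1 ?addr0; first by rewrite ffunE eqxx mul1r.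
  by move=> B /negbTE h; rewrite ffunE h mul0r.
move=> f /andP [_ hfg]; rewrite /bq.
have -> : (mono_of f == b) = false.
  by apply/negbTE; apply: contra hfg => /eqP; rewrite -hg => /mono_of_inj ->.
by rewrite dotCl0l mulr0.
Qed.

Lemma adjk (R : realFieldType) m k (Q P : cpoly R m) : (2 <= k)%N ->
  ipN k k (xPx Q) P = ipN k (k - 2)%N Q (dPd P).
Proof.
move=> hk; have := @adjoint R m k (k - 2)%N Q P; rewrite -addn2 subnK // => h; exact: (h (leqnn k)).
Qed.

Lemma homk_xPx (R : realFieldType) m k (Q : cpoly R m) : (2 <= k)%N ->
  isHom (k - 2)%N Q -> isHom k (xPx Q).
Proof. by move=> hk hQ; have := hom_xPx hQ; rewrite -addn2 subnK. Qed.

Lemma homk_dPd (R : realFieldType) m k (P : cpoly R m) : (2 <= k)%N ->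
  isHom k P -> isHom (k - 2)%N (dPd P).
Proof. by move=> hk hP; apply: hom_dPd; rewrite -addn2 subnK. Qed.

Unset Implicit Arguments.

Theorem mainTheorem13 (R : realFieldType) (m k : nat) : (2 <= k)%N ->
  [/\ (* x P(k-2) x is contained in P(k) *)
      (forall Q : cpoly R m, isHom (k - 2) Q -> isHom k (xPx Q)),
      (* P(k) = I(k) + x P(k-2) x *)
      (forall P : cpoly R m, isHom k P ->
         exists I Q : cpoly R m, [/\ infra k I, isHom (k - 2) Q & P = padd I (xPx Q)]),
      (* the sum is direct *)
      (forall I Q : cpoly R m, infra k I -> isHom (k - 2) Q -> I = xPx Q -> I = pzero R m),
      (* orthogonality *)
      (forall I Q : cpoly R m, infra k I -> isHom (k - 2) Q ->
         ipk k I (xPx Q) = 0 /\ ipk k (xPx Q) I = 0)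
    & (* I(k) is the orthogonal complement of x P(k-2) x in P(k) *)
      (forall P : cpoly R m, isHom k P ->
         (infra k P <-> forall Q : cpoly R m, isHom (k - 2) Q -> ipk k (xPx Q) P = 0))].
Proof.
move=> hk.
have orth : forall I Q : cpoly R m, infra k I -> ipN k k (xPx Q) I = 0.
  by move=> I Q [_ hI]; rewrite adjk // hI ipNC ipN_zero.
split.
- by move=> Q; apply: homk_xPx.
- move=> P hP.
  have [Q [sQ oQ]] := @GS R m k (basis R m (k - 2)%N) hk (@basis_hom R m (k - 2)%N) P.
  have hQ : isHom (k - 2)%N Q by apply: span_hom sQ; apply: basis_hom.
  exists (pcomb 1 P (-1) (xPx Q)), Q; split => //.
  + split; first by apply: hom_comb => //; apply: homk_xPx.
    set I := pcomb 1 P (-1) (xPx Q) in oQ *.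
    have hD : isHom (k - 2)%N (dPd I).
      by apply: homk_dPd => //; apply: hom_comb => //; apply: homk_xPx.
    apply: functional_extensionality => a; apply/ffunP => A; rewrite /pzero ffunE.
    case: (eqVneq (mdeg a) (k - 2)%N) => ha; last by rewrite hD //; [rewrite ffunE | apply/eqP].
    have [f hf] : exists f : {ffun 'I_m -> 'I_(k - 2)%N.+1}, mono_of f = a.
      by apply: mono_of_surj; rewrite ha.
    have hfd : mdeg (mono_of f) == (k - 2)%N by rewrite hf ha.
    have := oQ _ (basis_in R A hfd).
    rewrite adjk // hf ipN_bq // ?leq_subr // => /eqP.
    by rewrite mulf_eq0 pnatr_eq0 (negbTE (lt0n_neq0 (fct_gt0 a))) /= => /eqP.
  + apply: functional_extensionality => a; apply/ffunP => A; rewrite /padd /pcomb !ffunE.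
    by rewrite !mul1r mulN1r subrK.
- move=> I Q hI hQ e.
  apply: (ipN_pos (N := k) (proj1 hI) (leqnn k)).
  by rewrite {1}e orth.
- move=> I Q hI hQ; rewrite !ipk_ipN ipNC; split; exact: orth.
move=> P hP; split.
  by move=> hI Q hQ; rewrite ipk_ipN orth.
move=> h; split => //.
have hD := homk_dPd hk hP.
apply: (ipN_pos (N := k) hD (leq_subr 2 k)).
by rewrite -adjk // -ipk_ipN h.
Qed.
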